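(* Let $\Omega=(a_1,b_1)\times\cdots\times(a_n,b_n)\subset\mathbb{R}^n$ be a bounded box. There is a constant $C_P(\Omega)$, independent of the admissible mesh size vector $h$, such that $\|u\|_{L^2}\le C_P(\Omega)\|u\|_D$ for all $u\in W_0^{1,2}(\overline{\Omega}_h)$. Moreover $$\frac{1}{\lambda_{1,h}}\le C_P(\Omega)^2\le\frac{1}{4n^2}\sum_{i=1}^n(b_i-a_i)^2,$$ where the lower bound is optimal (for fixed $h$ the smallest admissible constant $C$ satisfies $C^2=1/\lambda_{1,h}$).
   Context: Admissible mesh: $h_i>0$, $a_i=k_ih_i$, $b_i=l_ih_i$, $k_i,l_i\in\mathbb{Z}$, $l_i-k_i>1$; $\mathbb{R}^n_h=\{(h_1z_1,\dots,h_nz_n):z_i\in\mathbb{Z}\}$, $\overline{\Omega}_h=\overline{\Omega}\cap\mathbb{R}^n_h$, $\partial\Omega_h=\partial\Omega\cap\mathbb{R}^n_h$, $\partial_i^+\Omega_h=\partial\Omega_h\cap\{x_i=b_i\}$, $\mathbf{h}=h_1\cdots h_n$, $D_i^+u(x)=(u(x+h_ie_i)-u(x))/h_i$. $\|u\|_{L^2}^2=\sum_{x\in\overline{\Omega}_h}|u(x)|^2\mathbf{h}$, $\|u\|_D^2=\sum_{i=1}^n\sum_{x\in\overline{\Omega}_h\setminus\partial_i^+\Omega_h}|D_i^+u(x)|^2\mathbf{h}$. $W_0^{1,2}(\overline{\Omega}_h)$ is the set of $u:\overline{\Omega}_h\to\mathbb{R}$ with $u=0$ on $\partial\Omega_h$.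 $\lambda_{1,h}=\sum_{i=1}^n\frac{4}{h_i^2}\sin^2\big(\frac{\pi h_i}{2(b_i-a_i)}\big)$ is the first Dirichlet eigenvalue of $-\Delta_h$, $\Delta_hu(x)=\sum_i\frac{u(x+h_ie_i)-2u(x)+u(x-h_ie_i)}{h_i^2}$. *)

(* Defs.v *)
From mathcomp Require Import all_boot all_order all_algebra.
From mathcomp Require Import all_classical all_reals all_analysis.
Set Implicit Arguments.
Unset Strict Implicit.
Unset Printing Implicit Defensive.
Import Order.TTheory GRing.Theory Num.Theory.
Local Open Scope ring_scope.

(* Box Omega = prod_i (a_i, b_i); mesh h with a_i = k_i h_i, b_i = l_i h_i.
   Grid points of closure(Omega)_h are x = (h_1 z_1, ..., h_n z_n) with
   z : 'I_n -> int, k_i <= z_i <= l_i. *)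

Definition admissible (R : realType) (n : nat) (a b h : 'I_n -> R)
    (k l : 'I_n -> int) : Prop :=
  forall i : 'I_n, 0 < h i /\ a i = (k i)%:~R * h i /\ b i = (l i)%:~R * h i
                   /\ 1 < l i - k i.

Definition gpt (R : realType) (n : nat) (h : 'I_n -> R) (z : 'I_n -> int)
  : 'rV[R]_n := \row_i (h i * (z i)%:~R).

Definition in_box (n : nat) (k l : 'I_n -> int) (z : 'I_n -> int) : Prop :=
  forall i, k i <= z i <= l i.

Definition on_bdry (n : nat) (k l : 'I_n -> int) (z : 'I_n -> int) : bool :=
  [exists i, (z i == k i) || (z i == l i)].

Definition gbound (n : nat) (k l : 'I_n -> int) : nat :=
  (\max_(i < n) `|l i - k i|)%N.

(* sum of F z over all integer vectors z with k_i <= z_i <= l_i (each once) *)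
Definition gridsum (R : realType) (n : nat) (k l : 'I_n -> int)
    (F : ('I_n -> int) -> R) : R :=
  \sum_(j : {ffun 'I_n -> 'I_(gbound k l).+1}
         | [forall i, k i + Posz (j i) <= l i])
     F (fun i => k i + Posz (j i)).

Definition hprod (R : realType) (n : nat) (h : 'I_n -> R) : R :=
  \prod_(i < n) h i.

Definition Dplus (R : realType) (n : nat) (h : 'I_n -> R) (i : 'I_n)
    (u : 'rV[R]_n -> R) (x : 'rV[R]_n) : R :=
  (u (x + h i *: delta_mx 0 i) - u x) / h i.

Definition W0 (R : realType) (n : nat) (h : 'I_n -> R) (k l : 'I_n -> int)
    (u : 'rV[R]_n -> R) : Prop :=
  forall z, in_box k l z -> on_bdry k l z -> u (gpt h z) = 0.

Definition L2sq (R : realType) (n : nat) (h : 'I_n -> R) (k l : 'I_n -> int)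
    (u : 'rV[R]_n -> R) : R :=
  gridsum k l (fun z => u (gpt h z) ^+ 2 * hprod h).

(* inner sum over closure(Omega)_h minus d_i^+ Omega_h, i.e. z_i <> l_i *)
Definition Dsq (R : realType) (n : nat) (h : 'I_n -> R) (k l : 'I_n -> int)
    (u : 'rV[R]_n -> R) : R :=
  \sum_(i < n) gridsum k l (fun z =>
     if z i != l i then Dplus h i u (gpt h z) ^+ 2 * hprod h else 0).

Definition L2norm (R : realType) (n : nat) (h : 'I_n -> R) (k l : 'I_n -> int)
    (u : 'rV[R]_n -> R) : R := Num.sqrt (L2sq h k l u).

Definition Dnorm (R : realType) (n : nat) (h : 'I_n -> R) (k l : 'I_n -> int)
    (u : 'rV[R]_n -> R) : R := Num.sqrt (Dsq h k l u).

Definition lambda1 (R : realType) (n : nat) (a b h : 'I_n -> R) : R :=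
  \sum_(i < n) 4 / h i ^+ 2 * sin (pi * h i / (2 * (b i - a i))) ^+ 2.

(* Main.v *)
Require Import Defs.
From mathcomp Require Import all_boot all_order all_algebra.
From mathcomp Require Import all_classical all_reals all_analysis.
From mathcomp Require Import zify ring lra.
Import Order.TTheory GRing.Theory Num.Theory.
Local Open Scope ring_scope.
Set Implicit Arguments.
Unset Strict Implicit.
Unset Printing Implicit Defensive.

Section Grid.
Variables (R : realType) (n : nat) (k l : 'I_n -> int).

Definition ei (i : 'I_n) (z : 'I_n -> int) : 'I_n -> int :=
  fun t => z t + (t == i)%:R.

Lemma gridsum_eq (F G : ('I_n -> int) -> R) :
  (forall z, in_box k l z -> F z = G z) -> gridsum k l F = gridsum k l G.
Proof.
move=> FG; apply: eq_bigr => j /forallP Pj; apply: FG => t.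
by rewrite Pj andbT lerDl.
Qed.

Lemma gridsumD (F G : ('I_n -> int) -> R) :
  gridsum k l (fun z => F z + G z) = gridsum k l F + gridsum k l G.
Proof. by rewrite /gridsum big_split. Qed.

Lemma gridsumB (F G : ('I_n -> int) -> R) :
  gridsum k l (fun z => F z - G z) = gridsum k l F - gridsum k l G.
Proof. by rewrite /gridsum sumrB. Qed.

Lemma gridsumZ c (F : ('I_n -> int) -> R) :
  gridsum k l (fun z => c * F z) = c * gridsum k l F.
Proof. by rewrite /gridsum mulr_sumr. Qed.

Lemma gridsum_ge0 (F : ('I_n -> int) -> R) :
  (forall z, in_box k l z -> 0 <= F z) -> 0 <= gridsum k l F.
Proof.
move=> F0; apply: sumr_ge0 => j /forallP Pj; apply: F0 => t.
by rewrite Pj andbT lerDl.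
Qed.

Lemma gbound_ge (i : 'I_n) : l i - k i <= (gbound k l)%:Z.
Proof.
have H : (`|l i - k i| <= gbound k l)%N.
  rewrite /gbound; apply: (@leq_bigmax _ (fun j : 'I_n => _) i).
apply: le_trans (ler_norm _) _.
rewrite -abszE lez_nat //.
Qed.

Lemma gridsum_shift (i : 'I_n) (F : ('I_n -> int) -> R) :
  gridsum k l (fun z => if z i != l i then F (ei i z) else 0) =
  gridsum k l (fun z => if z i != k i then F z else 0).
Proof.
rewrite /gridsum; set g := gbound k l.
set P := fun j : {ffun 'I_n -> 'I_g.+1} => [forall t, k t + Posz (j t) <= l t].
set zf := fun j : {ffun 'I_n -> 'I_g.+1} => (fun t => k t + Posz (j t)).
rewrite -!big_mkcondr /=.
pose sg := fun j : {ffun 'I_n -> 'I_g.+1} =>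
  [ffun t => if t == i then inord (j t).+1 else j t] : {ffun 'I_n -> 'I_g.+1}.
pose sg' := fun j : {ffun 'I_n -> 'I_g.+1} =>
  [ffun t => if t == i then inord (j t).-1 else j t] : {ffun 'I_n -> 'I_g.+1}.
have gi := gbound_ge i.
rewrite [RHS](reindex sg) /=; last first.
  exists sg' => j.
    rewrite inE => /andP[_]; rewrite /sg /sg' ffunE eqxx => H.
    apply/ffunP => t; rewrite !ffunE; case: eqP => [->|//].
    case: (ltnP (j i) g) => ji.
      by rewrite inordK //= inord_val.
    have jg : (j i : nat) = g by apply/eqP; rewrite eqn_leq ji -ltnS ltn_ord.
    move: H; rewrite jg.
    have -> : (inord g.+1 : 'I_g.+1) = ord0.
      by apply/val_inj; rewrite /= /inord /insubd insubF //= ltnn.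
    by rewrite /= addr0 eqxx.
  rewrite inE => /andP[_ H]; rewrite /sg /sg'.
  apply/ffunP => t; rewrite !ffunE; case: eqP => [->|//].
  have ji0 : (0 < j i)%N.
    by rewrite lt0n; apply: contraNneq H => ->; rewrite addr0.
  rewrite inordK ?prednK ?inord_val //.
  by rewrite ltnW.
apply: eq_big => j.
  have sgt t : t != i -> sg j t = j t by move=> /negbTE ti; rewrite /sg ffunE ti.
  case: (ltnP (j i) g) => ji.
    have sgi : (sg j i : nat) = (j i).+1 by rewrite /sg ffunE eqxx inordK.
    apply/andP/andP => [[/forallP A B]|[/forallP A B]]; split.
    - apply/forallP => t; case: (eqVneq t i) => [->|ti]; last first.
        by have := A t; rewrite sgt.
      have := A i; move: sgi; lia.
    - have := A i; move: sgi; lia.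
    - apply/forallP => t; case: (eqVneq t i) => [->|ti]; last first.
        by have := A t; rewrite sgt.
      have := A i; move: sgi; lia.
    - apply/eqP => E; have := A i; move: sgi E; lia.
  have jg : (j i : nat) = g by apply/eqP; rewrite eqn_leq ji -ltnS ltn_ord.
  have -> : (sg j i : nat) = 0%N.
    by rewrite /sg ffunE eqxx jg /inord /insubd insubF //= ltnn.
  rewrite addr0 eqxx andbF; apply/negbTE/negP => /andP[/forallP A].
  by have := A i; rewrite jg; move: gi; lia.
move=> /andP[/forallP A B]; congr F; apply: boolp.funext => t.
rewrite /ei; case: (eqVneq t i) => [->|ti]; last first.
  by rewrite /sg ffunE (negbTE ti) addr0.
have ji : (j i < g)%N by have := A i; move: B gi; lia.
rewrite /sg ffunE eqxx inordK //; lia.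
Qed.
End Grid.

Ltac simp := rewrite ?(mul0r, mulr0, invr0, subr0, sub0r, add0r, addr0, expr0n, sqrrN, mulNr, mulrN, opprK, oppr0) /=.

Lemma alg_id (R : realType) (p q x y : R) : (p = 0 -> x = 0) -> (q = 0 -> y = 0) ->
  (y - x) ^+ 2 = (p * y - q * x) ^+ 2 / (p * q) + (q - p) * (y ^+ 2 / q - x ^+ 2 / p).
Proof.
have [->|p0] := eqVneq p 0.
  move=> /(_ erefl) ->; have [->|q0] := eqVneq q 0.
    by move=> /(_ erefl) ->; simp.
  move=> _; simp.
  by rewrite mulrCA divff ?mulr1.
have [->|q0] := eqVneq q 0.
  move=> _ /(_ erefl) ->; simp.
  by rewrite mulrCA divff ?mulr1.
by move=> _ _; field; apply/andP.
Qed.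

Section Line.
Variables (R : realType) (m : int).
Hypothesis m_gt1 : 1 < m.

Definition phi (t : int) : R := sin (pi * t%:~R / m%:~R).
Definition mu : R := 2 - 2 * cos (pi / m%:~R).

Lemma mR_gt0 : 0 < m%:~R :> R.
Proof. by rewrite ltr0z; lia. Qed.

Lemma phi0 : phi 0 = 0.
Proof. by rewrite /phi mulr0 mul0r sin0. Qed.

Lemma phim : phi m = 0.
Proof. by rewrite /phi mulfK ?sinpi // gt_eqF // mR_gt0. Qed.

Lemma phi_gt0 t : 0 < t < m -> 0 < phi t.
Proof.
move=> tm; apply: sin_gt0_pi; have m0 := mR_gt0.
apply/andP; split.
  by rewrite divr_gt0 // mulr_gt0 ?pi_gt0 // ltr0z; lia.
rewrite ltr_pdivrMr // ltr_pM2l ?pi_gt0 // ltr_int; lia.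
Qed.

Lemma phi_ge0 t : 0 <= t <= m -> 0 <= phi t.
Proof.
move=> tm; have [->|t0] := eqVneq t 0; first by rewrite phi0.
have [->|tm'] := eqVneq t m; first by rewrite phim.
by apply/ltW/phi_gt0; lia.
Qed.

Lemma phi_rec t : phi (t - 1) + phi (t + 1) = 2 * cos (pi / m%:~R) * phi t.
Proof.
have m0 : m%:~R != 0 :> R by rewrite gt_eqF // mR_gt0.
rewrite /phi; set a := pi * t%:~R / m%:~R; set b := pi / m%:~R.
have -> : pi * (t - 1)%:~R / m%:~R = a - b :> R.
  by rewrite /a /b intrD /=; field.
have -> : pi * (t + 1)%:~R / m%:~R = a + b :> R.
  by rewrite /a /b intrD /=; field.
rewrite !sinD sinN cosN; ring.
Qed.

Lemma mu_sin : mu = 4 * sin (pi / (2 * m%:~R)) ^+ 2.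
Proof.
rewrite /mu; have -> : pi / m%:~R = pi / (2 * m%:~R) + pi / (2 * m%:~R) :> R.
  by field; rewrite gt_eqF // mR_gt0.
rewrite cosD; have := @cos2Dsin2 R (pi / (2 * m%:~R)).
set c := cos _; set s := sin _ => H.
have -> : c * c = 1 - s * s by move: H; rewrite !expr2; lra.
ring.
Qed.

End Line.

Lemma sin_mul_le (R : realType) (x : R) (N : nat) :
  `|sin (x *+ N)| <= N%:R * `|sin x|.
Proof.
elim: N => [|N IH]; first by rewrite mulr0n sin0 normr0 mul0r.
rewrite mulrS sinD.
apply: le_trans (ler_normD _ _) _; rewrite !normrM.
have h1 : `|sin x| * `|cos (x *+ N)| <= `|sin x| := ler_piMr (normr_ge0 _) (cos_max _).
have h2 : `|cos x| * `|sin (x *+ N)| <= N%:R * `|sin x| :=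
  le_trans (ler_piMl (normr_ge0 _) (cos_max _)) IH.
rewrite -natr1; lra.
Qed.

Lemma sin_lb (R : realType) (m : int) : 1 < m ->
  1 / m%:~R <= sin (pi / (2 * m%:~R)) :> R.
Proof.
move=> m1; have m0 : 0 < m%:~R :> R by rewrite ltr0z; lia.
have s0 : 0 <= sin (pi / (2 * m%:~R)) :> R.
  apply: sin_ge0_pi; apply/andP; split.
    by rewrite divr_ge0 ?pi_ge0 // mulr_ge0 // ltW.
  rewrite ler_pdivrMr ?mulr_gt0 //; apply: ler_peMr; first exact: pi_ge0.
  have : 1 <= m%:~R :> R by rewrite ler1z; lia.
  lra.
have := sin_mul_le (pi / (2 * m%:~R) : R) `|m|%N.
have -> : (pi / (2 * m%:~R)) *+ `|m|%N = pi / 2 :> R.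
  rewrite -mulr_natr; have -> : (`|m|%N%:R : R) = m%:~R.
    by rewrite -[m]gez0_abs ?pmulrn //; lia.
  by field; rewrite gt_eqF.
rewrite sin_pihalf normr1 ger0_norm //.
have -> : (`|m|%N%:R : R) = m%:~R by rewrite -[m]gez0_abs ?pmulrn //; lia.
by move=> H; rewrite ler_pdivrMr // mulrC.
Qed.

Section Dir.
Variables (R : realType) (n : nat) (h : 'I_n -> R) (k l : 'I_n -> int).
Variables (u : 'rV[R]_n -> R) (i : 'I_n).
Hypothesis m_gt1 : 1 < l i - k i.
Hypothesis W : W0 h k l u.

Definition vv z := u (gpt h z).
Definition tt (z : 'I_n -> int) := z i - k i.
Definition psi z : R := vv z ^+ 2 / phi R (l i - k i) (tt z).
Definition dd s : R := phi R (l i - k i) (s + 1) - phi R (l i - k i) s.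
Definition sq z : R :=
  (phi R (l i - k i) (tt z) * vv (ei i z) - phi R (l i - k i) (tt z + 1) * vv z) ^+ 2
  / (phi R (l i - k i) (tt z) * phi R (l i - k i) (tt z + 1)).

Lemma tt_ei z : tt (ei i z) = tt z + 1.
Proof. by rewrite /tt /ei eqxx addrAC. Qed.

Lemma ei_box z : in_box k l z -> z i != l i -> in_box k l (ei i z).
Proof.
move=> zb zl t; rewrite /ei; case: (eqVneq t i) => [->|ti].
  by have := zb i; move: zl; lia.
by rewrite addr0; apply: zb.
Qed.

Lemma v_bd z : in_box k l z -> phi R (l i - k i) (tt z) = 0 -> vv z = 0.
Proof.
move=> zb p0; have := zb i; rewrite /tt in p0 => zi.
have [zz|] := boolP ((k i < z i) && (z i < l i)).
  have : 0 < phi R (l i - k i) (z i - k i).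
    by apply: phi_gt0 => //; move: zz; lia.
  by rewrite p0 ltxx.
move=> nz; apply: W => //; apply/existsP; exists i.
by move: nz zi; lia.
Qed.

Lemma dir_id :
  gridsum k l (fun z => if z i != l i then (vv (ei i z) - vv z) ^+ 2 else 0) =
  gridsum k l (fun z => if z i != l i then sq z else 0)
  + mu R (l i - k i) * gridsum k l (fun z => vv z ^+ 2).
Proof.
transitivity (gridsum k l (fun z => (if z i != l i then sq z else 0) +
   ((if z i != l i then dd (tt z) * psi (ei i z) else 0)
    - (if z i != l i then dd (tt z) * psi z else 0)))).
  apply: gridsum_eq => z zb; case: ifP => zl; last by rewrite subrr addr0.
  rewrite (@alg_id R (phi R (l i - k i) (tt z)) (phi R (l i - k i) (tt z + 1)) (vv z) (vv (ei i z))).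
  - by rewrite /sq /psi /dd tt_ei; ring.
  - exact: v_bd.
  - by move=> q0; apply: v_bd; [exact: ei_box | rewrite tt_ei].
rewrite gridsumD gridsumB; congr (_ + _).
have E1 : gridsum k l (fun z => if z i != l i then dd (tt z) * psi (ei i z) else 0)
        = gridsum k l (fun z => dd (tt z - 1) * psi z).
  transitivity (gridsum k l (fun z => if z i != l i then
      (fun w => dd (tt w - 1) * psi w) (ei i z) else 0)).
    by apply: gridsum_eq => z _; rewrite /= tt_ei addrK.
  rewrite (@gridsum_shift R n k l i (fun w => dd (tt w - 1) * psi w)).
  apply: gridsum_eq => z zb; case: ifP => // /negbFE/eqP zk.
  by rewrite /psi /tt zk subrr phi0 invr0 !mulr0.
have E2 : gridsum k l (fun z => if z i != l i then dd (tt z) * psi z else 0)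
        = gridsum k l (fun z => dd (tt z) * psi z).
  apply: gridsum_eq => z zb; case: ifP => // /negbFE/eqP zl.
  by rewrite /psi /tt zl phim // invr0 !mulr0.
rewrite E1 E2 -gridsumB -gridsumZ; apply: gridsum_eq => z zb.
have R1 : dd (tt z - 1) - dd (tt z) = mu R (l i - k i) * phi R (l i - k i) (tt z).
  rewrite /dd subrK /mu; have := @phi_rec R _ m_gt1 (tt z); lra.
rewrite -mulrBl R1 /psi; have [p0|p0] := eqVneq (phi R (l i - k i) (tt z)) 0.
  by rewrite (v_bd zb p0) p0 !(mulr0, mul0r, expr0n).
by field.
Qed.

End Dir.

Lemma sq_ge0 (R : realType) (n : nat) (h : 'I_n -> R) (k l : 'I_n -> int) u i z :
  1 < l i - k i -> in_box k l z -> z i != l i -> 0 <= sq h k l u i z.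
Proof.
move=> m1 zb zl; rewrite /sq; apply: divr_ge0; first exact: sqr_ge0.
have := zb i; rewrite /tt => zi.
by apply: mulr_ge0; apply: phi_ge0 => //; move: zl zi; lia.
Qed.

Lemma gpt_ei (R : realType) (n : nat) (h : 'I_n -> R) i z :
  gpt h (ei i z) = gpt h z + h i *: delta_mx 0 i.
Proof.
apply/rowP => t; rewrite !mxE /ei eqxx /=; case: (eqVneq t i) => [->|ti].
  by rewrite intrD mulrDr.
by rewrite addr0 mulr0 addr0.
Qed.

Lemma Dplus_gpt (R : realType) (n : nat) (h : 'I_n -> R) i u z :
  Dplus h i u (gpt h z) = (vv h u (ei i z) - vv h u z) / h i.
Proof. by rewrite /Dplus /vv gpt_ei. Qed.

Section Main.
Variables (R : realType) (n : nat) (a b h : 'I_n -> R) (k l : 'I_n -> int).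
Hypothesis adm : admissible a b h k l.

Lemma m_gt1 i : 1 < l i - k i.
Proof. by have [_ [_ [_ ?]]] := adm i. Qed.

Lemma h_gt0 i : 0 < h i.
Proof. by have [? _] := adm i. Qed.

Lemma hprod_gt0 : 0 < hprod h.
Proof. by apply: prodr_gt0 => i _; apply: h_gt0. Qed.

Lemma ba_eq i : b i - a i = (l i - k i)%:~R * h i.
Proof. by have [_ [-> [-> _]]] := adm i; rewrite intrB mulrBl. Qed.

Lemma lam_term i : 4 / h i ^+ 2 * sin (pi * h i / (2 * (b i - a i))) ^+ 2
   = mu R (l i - k i) / h i ^+ 2.
Proof.
have h0 : h i != 0 by rewrite gt_eqF // h_gt0.
have m0 : (l i - k i)%:~R != 0 :> R by rewrite gt_eqF // (mR_gt0 R (m_gt1 i)).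
rewrite (mu_sin R (m_gt1 i)) ba_eq.
have -> : pi * h i / (2 * ((l i - k i)%:~R * h i)) = pi / (2 * (l i - k i)%:~R) :> R.
  by field; rewrite h0 andbT -intrB.
by field.
Qed.

Variable u : 'rV[R]_n -> R.
Hypothesis W : W0 h k l u.

Lemma dir_val i :
  gridsum k l (fun z => if z i != l i then Dplus h i u (gpt h z) ^+ 2 * hprod h else 0)
  = hprod h / h i ^+ 2 * (gridsum k l (fun z => if z i != l i then sq h k l u i z else 0)
      + mu R (l i - k i) * gridsum k l (fun z => vv h u z ^+ 2)).
Proof.
have h0 : h i != 0 by rewrite gt_eqF // h_gt0.
rewrite -(dir_id (m_gt1 i) W) -gridsumZ; apply: gridsum_eq => z _.
case: ifP => _; last by rewrite mulr0.
by rewrite Dplus_gpt; field.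
Qed.

Lemma L2_eq : L2sq h k l u = hprod h * gridsum k l (fun z => vv h u z ^+ 2).
Proof. by rewrite /L2sq -gridsumZ; apply: gridsum_eq => z _; rewrite mulrC. Qed.

Lemma Dsq_id : Dsq h k l u =
  \sum_(i < n) hprod h / h i ^+ 2 * gridsum k l (fun z => if z i != l i then sq h k l u i z else 0)
  + lambda1 a b h * L2sq h k l u.
Proof.
rewrite /Dsq (eq_bigr _ (fun i _ => dir_val i)) /lambda1 (eq_bigr _ (fun i _ => lam_term i)).
rewrite L2_eq mulr_suml -big_split; apply: eq_bigr => i _ /=; ring.
Qed.

Lemma Dsq_ge : lambda1 a b h * L2sq h k l u <= Dsq h k l u.
Proof.
rewrite Dsq_id lerDr; apply: sumr_ge0 => i _; apply: mulr_ge0.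
  by apply: divr_ge0; [exact: ltW hprod_gt0 | exact: sqr_ge0].
apply: gridsum_ge0 => z zb; case: ifP => // zl; exact: sq_ge0 (m_gt1 i) zb zl.
Qed.

End Main.

Lemma amhm (R : realType) (n : nat) (x : 'I_n -> R) : (forall i, 0 < x i) ->
  n%:R ^+ 2 <= (\sum_(i < n) x i) * (\sum_(i < n) 1 / x i).
Proof.
move=> xp.
have E : (\sum_(i < n) x i) * (\sum_(i < n) 1 / x i) =
    \sum_(i < n) \sum_(j < n) x i / x j.
  by rewrite mulr_suml; apply: eq_bigr => i _; rewrite mulr_sumr; apply: eq_bigr => j _; rewrite mul1r.
have E2 : n%:R ^+ 2 = \sum_(i < n) \sum_(j < n) (1 : R).
  by rewrite sumr_const card_ord sumr_const card_ord expr2 mulr_natr.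
rewrite E E2.
set S := \sum_(i < n) \sum_(j < n) x i / x j.
set T := \sum_(i < n) \sum_(j < n) (1 : R).
have Ex : S = \sum_(i < n) \sum_(j < n) x j / x i by rewrite /S exchange_big.
have ET : \sum_(i < n) \sum_(j < n) ((1 : R) + 1) = T + T.
  by rewrite /T -big_split; apply: eq_bigr => i _; rewrite -big_split.
suff : \sum_(i < n) \sum_(j < n) ((1 : R) + 1) <= S + S by rewrite ET; lra.
rewrite {2}Ex -big_split; apply: ler_sum => i _; rewrite -big_split; apply: ler_sum => j _.
have xi := xp i; have xj := xp j.
suff H : (1 : R) + 1 <= x i / x j + x j / x i by exact: H.
have -> : x i / x j + x j / x i = 1 + 1 + (x i - x j) ^+ 2 / (x i * x j).
  by field; apply/andP; split; rewrite gt_eqF.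
rewrite lerDl; apply: divr_ge0; [exact: sqr_ge0 | exact: ltW (mulr_gt0 _ _)].
Qed.

Section Main2.
Variables (R : realType) (n : nat) (a b h : 'I_n -> R) (k l : 'I_n -> int).
Hypothesis adm : admissible a b h k l.

Lemma ba_gt0 i : 0 < b i - a i.
Proof.
rewrite (ba_eq adm) mulr_gt0 ?(h_gt0 adm) //.
exact: (mR_gt0 R (m_gt1 adm i)).
Qed.

Lemma lam_lb i : 4 / (b i - a i) ^+ 2 <=
  4 / h i ^+ 2 * sin (pi * h i / (2 * (b i - a i))) ^+ 2.
Proof.
have h0 := h_gt0 adm i; have m1 := m_gt1 adm i; have m0 := mR_gt0 R m1.
rewrite (lam_term adm) (mu_sin R m1) (ba_eq adm).
have S := sin_lb R m1.
set s := sin _ in S *; set m := (l i - k i)%:~R in S m0 *.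
have -> : 4 / (m * h i) ^+ 2 = 4 * (1 / m) ^+ 2 / h i ^+ 2.
  by field; rewrite -intrB !gt_eqF.
apply: ler_wpM2r; first by rewrite invr_ge0 sqr_ge0.
apply: ler_wpM2l => //; rewrite !expr2; apply: ler_pM => //.
  by rewrite divr_ge0 // ltW.
by rewrite divr_ge0 // ltW.
Qed.

Lemma lam_gt0 : (0 < n)%N -> 0 < lambda1 a b h.
Proof.
move=> n0; rewrite /lambda1.
apply: (lt_le_trans _ (ler_sum _ (fun i _ => lam_lb i))).
rewrite (bigD1 (Ordinal n0)) //=; apply: ltr_pwDl.
  by rewrite divr_gt0 // exprn_gt0 // ba_gt0.
by apply: sumr_ge0 => i _; rewrite divr_ge0 // sqr_ge0.
Qed.

Lemma inv_lam_le : (0 < n)%N ->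
  1 / lambda1 a b h <= 1 / (4 * n%:R ^+ 2) * \sum_(i < n) (b i - a i) ^+ 2.
Proof.
move=> n0; have lp := lam_gt0 n0.
have L0 i : 0 < (b i - a i) ^+ 2 by rewrite exprn_gt0 // ba_gt0.
have A := amhm L0.
have lamT : \sum_(i < n) 4 / (b i - a i) ^+ 2 <= lambda1 a b h.
  by apply: ler_sum => i _; apply: lam_lb.
have ET : \sum_(i < n) 4 / (b i - a i) ^+ 2 = 4 * \sum_(i < n) 1 / (b i - a i) ^+ 2.
  by rewrite mulr_sumr; apply: eq_bigr => i _; rewrite mulrA mulr1.
rewrite ET in lamT.
set P := \sum_(i < n) _ in A *; set Q := \sum_(i < n) 1 / _ in A lamT.
have n2 : 0 < n%:R ^+ 2 :> R by rewrite exprn_gt0 // ltr0n.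
have P0 : 0 <= P by apply: sumr_ge0 => i _; apply: ltW.
rewrite ler_pdivrMr // mul1r.
apply: le_trans (ler_wpM2l _ lamT).
  have -> : (4 * n%:R ^+ 2)^-1 * P * (4 * Q) = P * Q / n%:R ^+ 2.
    by field; rewrite pnatr_eq0 -lt0n.
  by rewrite ler_pdivlMr // mul1r.
by rewrite mulr_ge0 // divr_ge0 // mulr_ge0 // ltW.
Qed.

Lemma poincare u : W0 h k l u -> (0 < n)%N ->
  L2norm h k l u <= Num.sqrt (1 / lambda1 a b h) * Dnorm h k l u.
Proof.
move=> W n0; have lp := lam_gt0 n0.
rewrite /L2norm /Dnorm -sqrtrM; last by rewrite divr_ge0 // ltW.
apply: ler_wsqrtr.
rewrite mul1r mulrC ler_pdivlMr // mulrC; exact (Dsq_ge adm W).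
Qed.

End Main2.

Lemma gridsum_gt0 (R : realType) (n : nat) (k l : 'I_n -> int) (F : ('I_n -> int) -> R)
   (i0 : 'I_n) :
  (forall i, k i + 1 <= l i) -> (forall z, in_box k l z -> 0 <= F z) ->
  0 < F (fun t => k t + 1) -> 0 < gridsum k l F.
Proof.
move=> kl F0 Fp; rewrite /gridsum.
set g := gbound k l.
have g1 : (1 < g.+1)%N.
  have := gbound_ge k l i0; have := kl i0; rewrite -/g; lia.
pose j0 := [ffun t : 'I_n => (inord 1 : 'I_g.+1)].
have j0E t : (j0 t : nat) = 1%N by rewrite ffunE inordK.
have zj : (fun t => k t + Posz (j0 t)) = (fun t => k t + 1).
  by apply: boolp.funext => t; rewrite j0E.
rewrite (bigD1 j0) /=; last by apply/forallP => t; rewrite j0E; apply: kl.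
rewrite zj; apply: ltr_pwDl => //.
apply: sumr_ge0 => j /andP[/forallP Pj _]; apply: F0 => t.
by rewrite Pj andbT lerDl.
Qed.

Definition ustar (R : realType) (n : nat) (h : 'I_n -> R) (k l : 'I_n -> int)
  : 'rV[R]_n -> R :=
  fun x => \prod_(i < n) sin (pi * (x 0 i / h i - (k i)%:~R) / (l i - k i)%:~R).

Section Eig.
Variables (R : realType) (n : nat) (a b h : 'I_n -> R) (k l : 'I_n -> int).
Hypothesis adm : admissible a b h k l.

Lemma ustar_gpt z :
  vv h (ustar h k l) z = \prod_(i < n) phi R (l i - k i) (z i - k i).
Proof.
rewrite /vv /ustar; apply: eq_bigr => i _; rewrite /phi mxE.
have h0 : h i != 0 by rewrite gt_eqF // (h_gt0 adm).
by rewrite [h i * _]mulrC mulfK // !intrB.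
Qed.

Lemma ustar_W0 : W0 h k l (ustar h k l).
Proof.
move=> z zb /existsP[i /orP[] /eqP zi]; rewrite -/(vv h (ustar h k l) z) ustar_gpt;
  rewrite (bigD1 i) //= zi.
  by rewrite subrr phi0 mul0r.
by rewrite phim ?mul0r // (m_gt1 adm).
Qed.

Lemma ustar_sq i z : sq h k l (ustar h k l) i z = 0.
Proof.
rewrite /sq !ustar_gpt (bigD1 i) //= [\prod_(j < n) _](bigD1 i) //=.
have -> : \prod_(j < n | j != i) phi R (l j - k j) (ei i z j - k j)
        = \prod_(j < n | j != i) phi R (l j - k j) (z j - k j).
  by apply: eq_bigr => j ji; rewrite /ei (negbTE ji) addr0.
have -> : ei i z i - k i = tt k i z + 1 by rewrite /ei /tt eqxx addrAC.
rewrite /tt; set p := phi R _ (z i - k i); set q := phi R _ (z i - k i + 1).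
set Pr := \prod_(j < n | j != i) _.
by rewrite (_ : p * (q * Pr) - q * (p * Pr) = 0) ?expr0n ?mul0r //; ring.
Qed.

End Eig.

Section Opt.
Variables (R : realType) (n : nat) (a b h : 'I_n -> R) (k l : 'I_n -> int).
Hypothesis adm : admissible a b h k l.

Lemma Dsq_ustar : Dsq h k l (ustar h k l) = lambda1 a b h * L2sq h k l (ustar h k l).
Proof.
rewrite (Dsq_id adm (ustar_W0 adm)) big1 ?add0r // => i _.
rewrite (@gridsum_eq R n k l _ (fun _ => 0)); last first.
  by move=> z _; case: ifP => // _; rewrite (ustar_sq adm).
by rewrite /gridsum big1 ?mulr0.
Qed.

Lemma L2_ustar_gt0 : (0 < n)%N -> 0 < L2sq h k l (ustar h k l).
Proof.
move=> n0; rewrite L2_eq mulr_gt0 ?(hprod_gt0 adm) //.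
apply: (gridsum_gt0 (Ordinal n0)).
- by move=> i; have := m_gt1 adm i; lia.
- by move=> z _; apply: sqr_ge0.
rewrite (ustar_gpt adm) exprn_gt0 //; apply: prodr_gt0 => i _.
rewrite addrAC subrr add0r; apply: phi_gt0; first exact: m_gt1 adm i.
by have := m_gt1 adm i; lia.
Qed.

Lemma opt C : (0 < n)%N -> (forall u : 'rV[R]_n -> R, W0 h k l u ->
    L2norm h k l u <= C * Dnorm h k l u) -> 1 / lambda1 a b h <= C ^+ 2.
Proof.
move=> n0 H; have := H _ (ustar_W0 adm).
rewrite /L2norm /Dnorm Dsq_ustar sqrtrM; last exact: ltW (lam_gt0 adm n0).
have Lp := L2_ustar_gt0 n0; have lp := lam_gt0 adm n0.
set s := Num.sqrt (L2sq _ _ _ _); set q := Num.sqrt (lambda1 _ _ _).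
have sp : 0 < s by rewrite sqrtr_gt0.
have qp : 0 < q by rewrite sqrtr_gt0.
have q2 : q ^+ 2 = lambda1 a b h by rewrite sqr_sqrtr // ltW.
rewrite mulrA -{1}[s]mul1r ler_pM2r // => H1.
have c1 : 0 <= C * q := le_trans ler01 H1.
rewrite ler_pdivrMr // -q2 -exprMn.
by rewrite expr2 (le_trans H1) // ler_peMr.
Qed.

End Opt.


Theorem mainTheorem5 (R : realType) (n : nat) (a b : 'I_n -> R) :
  (0 < n)%N -> (forall i, a i < b i) ->
  exists CP : R, 0 <= CP /\
    (forall (h : 'I_n -> R) (k l : 'I_n -> int), admissible a b h k l ->
       forall u : 'rV[R]_n -> R, W0 h k l u ->
         L2norm h k l u <= CP * Dnorm h k l u) /\
    (forall (h : 'I_n -> R) (k l : 'I_n -> int), admissible a b h k l ->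
       1 / lambda1 a b h <= CP ^+ 2) /\
    CP ^+ 2 <= 1 / (4 * n%:R ^+ 2) * \sum_(i < n) (b i - a i) ^+ 2 /\
    (forall (h : 'I_n -> R) (k l : 'I_n -> int), admissible a b h k l ->
       (forall u : 'rV[R]_n -> R, W0 h k l u ->
          L2norm h k l u <= Num.sqrt (1 / lambda1 a b h) * Dnorm h k l u) /\
       (forall C : R, (forall u : 'rV[R]_n -> R, W0 h k l u ->
          L2norm h k l u <= C * Dnorm h k l u) ->
        1 / lambda1 a b h <= C ^+ 2)).
Proof.
move=> n0 ab.
have B0 : 0 <= 1 / (4 * n%:R ^+ 2) * \sum_(i < n) (b i - a i) ^+ 2 :> R.
  by rewrite mulr_ge0 ?divr_ge0 ?mulr_ge0 ?sqr_ge0 //; apply: sumr_ge0 => i _; apply: sqr_ge0.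
exists (Num.sqrt (1 / (4 * n%:R ^+ 2) * \sum_(i < n) (b i - a i) ^+ 2)).
have CP2 := sqr_sqrtr B0.
split; first exact: sqrtr_ge0.
split.
  move=> h k l adm u W; have P := poincare adm W n0; apply: le_trans P _.
  apply: ler_wpM2r; first exact: sqrtr_ge0.
  exact: ler_wsqrtr (inv_lam_le adm n0).
split; first by move=> h k l adm; rewrite CP2; exact (inv_lam_le adm n0).
split; first by rewrite CP2.
move=> h k l adm; split; first by move=> u W; exact (poincare adm W n0).
by move=> C; exact (opt adm n0).
Qed.
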